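(* For all $n\ge1$ and each $\mathsf{stat}\in\{\mathsf{nest},\mathsf{inv}\}$, with $D_n^{(\mathsf{stat},\mathsf{exc})}(q,t)=\sum_{\sigma\in\mathfrak{D}_n}q^{\mathsf{stat}\,\sigma}t^{\mathsf{exc}\,\sigma}$, $$D_{n}^{(\mathsf{stat}, \mathsf{exc})}(q, t)=\left(\frac{1+xt}{1+x}\right)^{n}P^{(\mathsf{stat}, \mathsf{cpk},\mathsf{exc})}\left(\mathfrak{D}_n; q, \frac{(1+x)^{2}t}{(x+t)(1+xt)},\frac{x+t}{1+xt}\right),$$ equivalently, $$P^{(\mathsf{stat}, \mathsf{cpk},\mathsf{exc})}(\mathfrak{D}_n; q, x,t)=\left(\frac{1+u}{1+uv}\right)^{n}D_{n}^{(\mathsf{stat}, \mathsf{exc})}(q, v),$$ where $u=\frac{1+t^{2}-2xt-(1-t)\sqrt{(1+t)^{2}-4xt}}{2(1-x)t}$ and $v=\frac{(1+t)^{2}-2xt-(1+t)\sqrt{(1+t)^{2}-4xt}}{2xt}$.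
   Context: $\mathfrak{D}_n$ is the set of derangements of $[n]$. $P^{(\mathsf{stat}_1,\ldots,\mathsf{stat}_m)}(\Omega;t_1,\ldots,t_m)=\sum_{\sigma\in\Omega}\prod_jt_j^{\mathsf{stat}_j\sigma}$. $\mathsf{exc}\,\sigma=\#\{i:\sigma(i)>i\}$, $\mathsf{cpk}\,\sigma=\#\{x:\sigma^{-1}(x)<x>\sigma(x)\}$, $\mathsf{inv}$ the inversion number, $\mathsf{nest}\,\sigma=\sum_{i}\#\{j:j<i<\sigma(i)<\sigma(j)\text{ or }\sigma(j)<\sigma(i)\le i<j\}$. *)

(* Defs.v *)
From mathcomp Require Import all_boot all_order all_algebra all_fingroup.
Set Implicit Arguments. Unset Strict Implicit. Unset Printing Implicit Defensive.
Import GRing.Theory Num.Theory.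

(* Permutations of [n] are modelled as 'S_n acting on 'I_n = {0,..,n-1};
   all statistics below only compare values and positions, so the shift
   [n] = {1..n} <-> {0..n-1} is harmless. *)

Definition derangement n (s : 'S_n) : bool := [forall i, s i != i].

Definition exc n (s : 'S_n) : nat := #|[set i : 'I_n | i < s i]|.

Definition cpk n (s : 'S_n) : nat :=
  #|[set x : 'I_n | ((s^-1)%g x < x) && (s x < x)]|.

Definition inv n (s : 'S_n) : nat :=
  #|[set p : 'I_n * 'I_n | (p.1 < p.2) && (s p.2 < s p.1)]|.

Definition nest n (s : 'S_n) : nat :=
  \sum_(i : 'I_n) #|[set j : 'I_n |
     [&& j < i, i < s i & s i < s j] || [&& s j < s i, s i <= i & i < j]]|.

Inductive stat_choice := Nest | Inv.

Definition stat (c : stat_choice) n (s : 'S_n) : nat :=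
  match c with Nest => nest s | Inv => inv s end.

Definition P3 (R : comRingType) (c : stat_choice) n (q x t : R) : R :=
  \sum_(s : 'S_n | derangement s) q ^+ stat c s * x ^+ cpk s * t ^+ exc s.

Definition Dn (R : comRingType) (c : stat_choice) n (q t : R) : R :=
  \sum_(s : 'S_n | derangement s) q ^+ stat c s * t ^+ exc s.

(* Main.v *)
Require Import Defs.
From mathcomp Require Import all_boot all_order all_algebra all_fingroup.
From mathcomp Require Import zify ring lra.
Set Implicit Arguments. Unset Strict Implicit. Unset Printing Implicit Defensive.
Import GRing.Theory Num.Theory.

Section ML.
Variable R : comNzRingType.
Variable q : R.
Variable n : nat.

Definition qn k := (\sum_(i < k) q ^+ i)%R.

Lemma qnS k : qn k.+1 = (qn k + q ^+ k)%R.
Proof. by rewrite /qn big_ord_recr. Qed.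

Lemma rank_sum (X : {set 'I_n}) :
  (\sum_(o in X) q ^+ (\sum_(j in X) (j < o) : nat))%R = qn #|X|.
Proof.
elim: {X}#|X| {-2}X (eqxx #|X|) => [|k IH] X /eqP hX.
  by move/eqP: hX; rewrite cards_eq0 => /eqP ->; rewrite big_set0 cards0 /qn big_ord0.
have [m0 m0X] : exists m0, m0 \in X by apply/set0Pn; rewrite -card_gt0 hX.
case: (arg_maxnP (fun m : 'I_n => (m:nat)) m0X) => m mX0 mmax.
have mX : m \in X := mX0.
have hXm : #|X :\ m| = k by move: hX; rewrite (cardsD1 m X) mX add1n => -[].
rewrite (bigD1 m mX) /= hX qnS -[in qn k]hXm -IH; last by rewrite hXm.
rewrite addrC; congr (_ + _)%R.
  apply: eq_big => [o|o /andP [oX om]]; first by rewrite in_setD1 andbC.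
  congr (_ ^+ _)%R; rewrite (bigD1 m mX) /=.
  have -> : (m < o) = false.
    by apply/negbTE; rewrite -leqNgt; exact: mmax.
  by rewrite add0n; apply: eq_bigl => j; rewrite in_setD1 andbC.
congr (_ ^+ _)%R; rewrite (bigD1 m mX) /= ltnn add0n -hXm -sum1_card.
apply: eq_big => [j|j /andP [jX jm]]; first by rewrite in_setD1 andbC.
move: (mmax _ jX) => /= jlem; rewrite ltn_neqAle jlem andbT.
by rewrite jm.
Qed.

Definition Sset (O C : {set 'I_n}) : {set {ffun 'I_n -> 'I_n}} :=
  [set f : {ffun 'I_n -> 'I_n} | [&& #|O| == #|C|,
     [forall i, if i \in O then (i < f i) && (f i \in C) else f i == i] &
     [forall i, forall j, [&& i \in O, j \in O & f i == f j] ==> (i == j)]]].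

Definition nestf (O : {set 'I_n}) (f : {ffun 'I_n -> 'I_n}) : nat :=
  \sum_(i in O) \sum_(j in O) ((j < i) && (f i < f j)).

Definition below (A : {set 'I_n}) (x : 'I_n) := [set y in A | y < x].
Definition hc (O C : {set 'I_n}) (c : 'I_n) := #|below O c| - #|below C c|.

Definition Msum O C := (\sum_(f in Sset O C) q ^+ nestf O f)%R.

Lemma SsetP (O C : {set 'I_n}) (f : {ffun 'I_n -> 'I_n}) : reflect
  [/\ #|O| = #|C|, forall i : 'I_n, i \in O -> i < f i /\ f i \in C,
      forall i, i \notin O -> f i = i & {in O &, injective f}]
  (f \in Sset O C).
Proof.
rewrite inE; apply: (iffP and3P) => [[/eqP hOC /forallP h1 /forallP h2]|[hOC h1 h2 h3]].
  split => //.
  - by move=> i iO; move: (h1 i); rewrite iO => /andP.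
  - by move=> i iO; move: (h1 i); rewrite (negbTE iO) => /eqP.
  - move=> i j iO jO e; move: (h2 i) => /forallP/(_ j).
    by rewrite iO jO e eqxx => /eqP.
split; first by apply/eqP.
  apply/forallP => i; case: ifP => iO; first by case: (h1 i iO) => -> ->.
  by rewrite h2 ?iO.
apply/forallP => i; apply/forallP => j; apply/implyP => /and3P [iO jO /eqP e].
by apply/eqP; exact: h3.
Qed.

Lemma Sset_onto (O C : {set 'I_n}) (f : {ffun 'I_n -> 'I_n}) : f \in Sset O C -> forall c, c \in C -> exists2 o, o \in O & f o = c.
Proof.
case/SsetP => hOC h1 h2 h3 c cC.
have sub : f @: O \subset C.
  by apply/subsetP => x /imsetP [o oO ->]; case: (h1 o oO).
have hcard : #|f @: O| = #|C| by rewrite card_in_imset.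
move: (subset_cardP hcard) => /(_ sub) eqC.
by move: cC; rewrite -eqC => /imsetP [o oO ->]; exists o.
Qed.

Definition extf (o c : 'I_n) (g : {ffun 'I_n -> 'I_n}) :=
  [ffun i => if i == o then c else g i].
Definition restrf (o : 'I_n) (f : {ffun 'I_n -> 'I_n}) :=
  [ffun i => if i == o then o else f i].

Section Step.
Variables (O C : {set 'I_n}) (o c : 'I_n).
Hypotheses (oO : o \in O) (cC : c \in C) (oc : o < c)
  (cmin : forall x, x \in C -> c <= x) (hOC : #|O| = #|C|).

Lemma cltx x : x \in C :\ c -> c < x.
Proof.
rewrite in_setD1 => /andP [xc xC]; rewrite ltn_neqAle cmin // andbT.
by rewrite eq_sym.
Qed.

Lemma step_set (g : {ffun 'I_n -> 'I_n}) : (extf o c g \in Sset O C) && (g o == o) = (g \in Sset (O :\ o) (C :\ c)).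
Proof.
have hc1 : #|O :\ o| = #|C :\ c|.
  by move: hOC; rewrite (cardsD1 o O) (cardsD1 c C) oO cC => -[].
apply/idP/idP.
  case/andP => /SsetP [_ h1 h2 h3] /eqP go.
  apply/SsetP; split => //.
  - move=> i; rewrite in_setD1 => /andP [io iO].
    case: (h1 i iO); rewrite ffunE (negbTE io) => -> giC; split => //.
    rewrite in_setD1 giC andbT; apply/negP => /eqP gic.
    have : extf o c g i = extf o c g o by rewrite !ffunE eqxx (negbTE io).
    by move/(h3 _ _ iO oO) => /eqP; rewrite (negbTE io).
  - move=> i; rewrite in_setD1 negb_and negbK; case: (eqVneq i o) => [-> _ //|io /= iO].
    by move: (h2 i iO); rewrite ffunE (negbTE io).
  - move=> i j; rewrite !in_setD1 => /andP [io iO] /andP [jo jO] e.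
    by apply: h3 => //; rewrite !ffunE (negbTE io) (negbTE jo).
case/SsetP => h0 h1 h2 h3.
have go : g o = o by apply: h2; rewrite in_setD1 eqxx.
rewrite go eqxx andbT; apply/SsetP; split => //.
- move=> i iO; rewrite ffunE; case: (eqVneq i o) => [->|io]; first by [].
  have iO' : i \in O :\ o by rewrite in_setD1 io.
  by case: (h1 i iO') => -> ; rewrite in_setD1 => /andP [].
- move=> i iO; rewrite ffunE; case: (eqVneq i o) => [eio|io].
    by move: iO; rewrite eio oO.
  by apply: h2; rewrite in_setD1 (negbTE iO) andbF.
- move=> i j iO jO; rewrite !ffunE.
  case: (eqVneq i o) => [->|io]; case: (eqVneq j o) => [->|jo] //.
  + move=> cgj; have jO' : j \in O :\ o by rewrite in_setD1 jo.
    by case: (h1 j jO') => _; rewrite -cgj in_setD1 eqxx.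
  + move=> gic; have iO' : i \in O :\ o by rewrite in_setD1 io.
    by case: (h1 i iO') => _; rewrite gic in_setD1 eqxx.
  + by apply: h3; rewrite in_setD1 ?io ?jo.
Qed.

Lemma step_nest (g : {ffun 'I_n -> 'I_n}) : g \in Sset (O :\ o) (C :\ c) ->
  nestf O (extf o c g) = (nestf (O :\ o) g + \sum_(j in O) (j < o))%N.
Proof.
case/SsetP => h0 h1 h2 h3.
rewrite /nestf (bigD1 o oO) /= addnC; congr (_ + _)%N.
  apply: eq_big => [i|i /andP [iO io]]; first by rewrite in_setD1 andbC.
  rewrite (bigD1 o oO) /= !ffunE eqxx (negbTE io).
  have iO' : i \in O :\ o by rewrite in_setD1 io.
  case: (h1 i iO') => _ /cltx ci.
  rewrite [(_ < c)%N]ltnNge (ltnW ci) andbF add0n.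
  apply: eq_big => [j|j /andP [jO jo]]; first by rewrite in_setD1 andbC.
  by rewrite !ffunE (negbTE jo).
apply: eq_bigr => j jO; rewrite !ffunE eqxx.
case: (eqVneq j o) => [->|jo]; first by rewrite ltnn.
have jO' : j \in O :\ o by rewrite in_setD1 jo.
by case: (h1 j jO') => _ /cltx ->; rewrite andbT.
Qed.

Lemma step_sum :
  (\sum_(f | (f \in Sset O C) && (f o == c)) q ^+ nestf O f)%R =
  (q ^+ (\sum_(j in O) (j < o)) * Msum (O :\ o) (C :\ c))%R.
Proof.
rewrite (reindex_onto (extf o c) (restrf o)); last first.
  move=> f /andP [_ /eqP foc]; apply/ffunP => i; rewrite !ffunE.
  by case: eqP => [->|] //; rewrite foc.
rewrite /Msum big_distrr /=; apply: eq_big => [g|g].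
  have -> : extf o c g o = c by rewrite ffunE eqxx.
  rewrite -step_set eqxx andbT; congr (_ && _).
  apply/eqP/eqP => [e|go].
    by have := congr1 (fun f : {ffun _ -> _} => f o) e; rewrite !ffunE eqxx.
  by apply/ffunP => i; rewrite !ffunE; case: eqP => [->|]; rewrite ?go.
move=> /andP [/andP [gS1 _] /eqP rg].
have go : g o = o.
  by have := congr1 (fun f : {ffun _ -> _} => f o) rg; rewrite !ffunE eqxx.
have gS : g \in Sset (O :\ o) (C :\ c) by rewrite -step_set gS1 go eqxx.
by rewrite step_nest // exprD mulrC.
Qed.
End Step.

Lemma setD1_sep (A : {set 'I_n}) (a x : 'I_n) :
  below (A :\ a) x = below A x :\ a.
Proof. by apply/setP => y; rewrite !inE andbA. Qed.

Lemma hc_step (O C : {set 'I_n}) (o c x : 'I_n) :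
  o \in O -> c \in C -> o < c -> c < x ->
  hc (O :\ o) (C :\ c) x = hc O C x.
Proof.
move=> oO cC oc cx; rewrite /hc !setD1_sep.
have h1 := cardsD1 o (below O x).
have h2 := cardsD1 c (below C x).
rewrite !inE oO cC (ltn_trans oc cx) cx /= in h1 h2.
by rewrite h1 h2 !add1n subSS.
Qed.

Lemma Msum_closed k : forall O C : {set 'I_n}, #|C| = k ->
  Msum O C = ((#|O| == #|C|)%:R * \prod_(c in C) qn (hc O C c))%R.
Proof.
elim: k => [|k IH] O C hC;
  (case: (boolP (#|O| == #|C|)) => hOC; last first;
   [by rewrite mul0r /Msum big_pred0 // => f; rewrite inE (negbTE hOC)|]).
  have C0 : C = set0 by apply/eqP; rewrite -cards_eq0 hC.
  have O0 : O = set0 by apply/eqP; rewrite -cards_eq0 (eqP hOC) hC.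
  subst; rewrite big_set0 mulr1 /Msum (big_pred1 [ffun i => i]).
    by rewrite /nestf big_set0 expr0.
  move=> f; apply/SsetP/eqP => [[_ _ h2 _]|->].
    by apply/ffunP => i; rewrite ffunE h2 // inE.
  split => //; first by move=> i; rewrite inE.
  - by move=> i _; rewrite ffunE.
  - by move=> i j; rewrite inE.
have [c0 c0C] : exists c0, c0 \in C by apply/set0Pn; rewrite -card_gt0 hC.
case: (arg_minnP (fun x : 'I_n => (x:nat)) c0C) => c cC0 cmin0.
have cC : c \in C := cC0.
have cmin : forall x, x \in C -> c <= x by move=> x xC; exact: (cmin0 x xC).
have hC' : #|C :\ c| = k by move: hC; rewrite (cardsD1 c C) cC add1n => -[].
have E1 : Msum O C = (\sum_(f in Sset O C)
    \sum_(o | (o \in O) && (f o == c)) q ^+ nestf O f)%R.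
  apply: eq_bigr => f fS; case: (Sset_onto fS cC) => o0 o0O fo0.
  rewrite (big_pred1 o0) // => o; apply/idP/idP => [/andP [oO /eqP foc]|/eqP ->].
    by case/SsetP: fS => _ _ _ h3; apply/eqP; apply: h3 => //; rewrite foc fo0.
  by rewrite o0O fo0 eqxx.
rewrite E1 (exchange_big_dep (fun o => o \in O)) /=; last by move=> f o _ /andP [].
rewrite (bigID (fun o : 'I_n => o < c)) /= [X in (_ + X)%R]big1 ?addr0; last first.
  move=> o /andP [oO oc]; rewrite big_pred0 // => f; apply/negbTE.
  apply/negP => /andP [fS /andP [_ /eqP foc]].
  case/SsetP: fS => _ h1 _ _; case: (h1 o oO) => ofo _.
  by move: oc; rewrite -foc ofo.
have cx : forall x, x \in C :\ c -> c < x.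
  move=> x; rewrite in_setD1 => /andP [xc xC]; rewrite ltn_neqAle cmin // andbT.
  by rewrite eq_sym.
rewrite (eq_bigr (fun o : 'I_n => q ^+ (\sum_(j in O) (j < o)) *
   \prod_(x in C :\ c) qn (hc O C x))%R); last first.
  move=> o /andP [oO oc].
  rewrite (eq_bigl (fun f => (f \in Sset O C) && (f o == c))) => [|f]; last by rewrite oO.
  rewrite step_sum // ?(eqP hOC) // (IH _ _ hC').
  have -> : #|O :\ o| == #|C :\ c|.
    by move: hOC; rewrite (cardsD1 o O) (cardsD1 c C) oO cC.
  rewrite mul1r; congr (_ * _)%R; apply: eq_bigr => x xC.
  by rewrite hc_step // cx.
rewrite -big_distrl /= mul1r (bigD1 c cC) /=.
have -> : hc O C c = #|below O c|.
  rewrite /hc; have -> : below C c = set0; last by rewrite cards0 subn0.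
  apply/setP => x; rewrite !inE; apply/negbTE; rewrite negb_and -leqNgt.
  by case: (boolP (x \in C)) => //= /cmin.
congr (_ * _)%R; last by apply: eq_bigl => x; rewrite in_setD1 andbC.
rewrite -rank_sum; apply: eq_big => [o|o]; first by rewrite !inE.
move=> /andP [oO oc]; congr (_ ^+ _)%R.
rewrite big_mkcond [RHS]big_mkcond; apply: eq_bigr => j _; rewrite !inE.
case: (boolP (j \in O)) => //= jO; case: (ltnP j o) => //= jo.
  by rewrite (ltn_trans jo oc).
by case: ifP.
Qed.
End ML.

Section Der.
Variable n : nat.
Implicit Types (s : 'S_n) (w : {ffun 'I_n -> bool * bool}).

Definition wd s : {ffun 'I_n -> bool * bool} := [ffun a : 'I_n => (a < s a, (s^-1)%g a < a)].
Definition Ou w := [set a | (w a).1].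
Definition Cu w := [set a | (w a).2].
Definition Ol w := [set a | ~~ (w a).2].
Definition Cl w := [set a | ~~ (w a).1].
Definition Phi s : {ffun 'I_n -> 'I_n} * {ffun 'I_n -> 'I_n} :=
  ([ffun i : 'I_n => if i < s i then s i else i],
   [ffun x : 'I_n => if x < (s^-1)%g x then (s^-1)%g x else x]).
Definition ginv (A : {set 'I_n}) (g : {ffun 'I_n -> 'I_n}) (i : 'I_n) :=
  odflt i [pick x in A | g x == i].
Definition PsiF w (p : {ffun 'I_n -> 'I_n} * {ffun 'I_n -> 'I_n}) : {ffun 'I_n -> 'I_n} :=
  [ffun i : 'I_n => if i \in Ou w then p.1 i else ginv (Ol w) p.2 i].
Definition Psi w p : 'S_n := insubd (1%g : 'S_n) (PsiF w p).

Lemma inOu w a : (a \in Ou w) = (w a).1. Proof. by rewrite inE. Qed.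
Lemma inCu w a : (a \in Cu w) = (w a).2. Proof. by rewrite inE. Qed.
Lemma inOl w a : (a \in Ol w) = ~~ (w a).2. Proof. by rewrite inE. Qed.
Lemma inCl w a : (a \in Cl w) = ~~ (w a).1. Proof. by rewrite inE. Qed.
Lemma wdE s a : wd s a = (a < s a, (s^-1)%g a < a). Proof. by rewrite ffunE. Qed.
Lemma Phi1E s i : (Phi s).1 i = if i < s i then s i else i. Proof. by rewrite ffunE. Qed.
Lemma Phi2E s i : (Phi s).2 i = if i < (s^-1)%g i then (s^-1)%g i else i.
Proof. by rewrite ffunE. Qed.
Ltac simp := rewrite ?inOu ?inCu ?inOl ?inCl ?wdE ?Phi1E ?Phi2E /=.

Lemma ordne (a b : 'I_n) : a != b -> (a : nat) != b.
Proof. by []. Qed.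

Lemma ginvP (A B : {set 'I_n}) g i : g \in Sset A B -> i \in B ->
  ginv A g i \in A /\ g (ginv A g i) = i.
Proof.
move=> gS iB; case: (Sset_onto gS iB) => x xA gx.
rewrite /ginv; case: pickP => [y /andP [yA /eqP gy] //|/(_ x)].
by rewrite xA gx eqxx.
Qed.

Lemma der_ne s : derangement s -> forall i, (s i : nat) != i.
Proof. by move=> /forallP h i; apply: ordne; apply: h. Qed.

Lemma der_inv_ne s : derangement s -> forall i, ((s^-1)%g i : nat) != i.
Proof.
move=> d i; apply: ordne; apply/eqP => e.
by move: (der_ne d i); rewrite -{1}e permKV eqxx.
Qed.

Lemma Phi1_S s : derangement s -> (Phi s).1 \in Sset (Ou (wd s)) (Cu (wd s)).
Proof.
move=> d; apply/SsetP; split.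
- have -> : Cu (wd s) = s @: Ou (wd s).
    apply/setP => a; simp; apply/idP/imsetP => [h|[x]].
      by exists ((s^-1)%g a); simp; rewrite ?permKV.
    by simp => h ->; rewrite permK.
  by rewrite card_imset //; apply: perm_inj.
- move=> i; simp => h; rewrite h; split => //.
  by simp; rewrite permK.
- by move=> i; simp => /negbTE ->.
- move=> i j; simp => -> ->; exact: perm_inj.
Qed.

Lemma Phi2_S s : derangement s -> (Phi s).2 \in Sset (Ol (wd s)) (Cl (wd s)).
Proof.
move=> d; apply/SsetP; split.
- have -> : Cl (wd s) = (s^-1)%g @: Ol (wd s).
    apply/setP => a; simp; apply/idP/imsetP => [h|[x]].
      by exists (s a); simp; rewrite permK.
    by simp => h ->; rewrite permKV.
  by rewrite card_imset //; apply: perm_inj.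
- move=> i; simp => h.
  have := der_inv_ne d i => ne.
  have hi : i < (s^-1)%g i by lia.
  by rewrite hi; split => //; simp; rewrite ?permKV.
- move=> i; simp; rewrite negbK => h.
  by have -> : (i < (s^-1)%g i) = false by lia.
- move=> i j; simp => hi hj.
  have := der_inv_ne d i; have := der_inv_ne d j => nj ni.
  have -> : (i < (s^-1)%g i) = true by lia.
  have -> : (j < (s^-1)%g j) = true by lia.
  exact: perm_inj.
Qed.

Lemma Psi_Phi s : derangement s -> Psi (wd s) (Phi s) = s.
Proof.
move=> d; have E : PsiF (wd s) (Phi s) = pval s.
  apply/ffunP => i; rewrite pvalE ffunE inE ffunE /=.
  case: ifP => hi; first by rewrite ffunE hi.
  have iC : i \in Cl (wd s) by simp; rewrite hi.
  case: (ginvP (Phi2_S d) iC); set x := ginv _ _ _.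
  simp; rewrite ?ffunE => hx.
  have := der_inv_ne d x => nx.
  have -> : (x < (s^-1)%g x) = true by lia.
  by move=> <-; rewrite permKV.
by rewrite /Psi E valKd.
Qed.

Lemma Psi_props w p : p.1 \in Sset (Ou w) (Cu w) -> p.2 \in Sset (Ol w) (Cl w) ->
  [/\ derangement (Psi w p), wd (Psi w p) = w & Phi (Psi w p) = p].
Proof.
move=> fS gS; case/SsetP: (fS) => _ f1 f2 f3; case/SsetP: (gS) => _ g1 g2 g3.
have ginvF : forall i, i \notin Ou w ->
    ginv (Ol w) p.2 i \in Ol w /\ p.2 (ginv (Ol w) p.2 i) = i.
  by move=> i hi; apply: ginvP gS _; move: hi; simp.
have Finj : injective (PsiF w p).
  move=> i j; rewrite !ffunE; case: ifP => hi; case: ifP => hj.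
  - exact: f3.
  - move=> e; case: (f1 i); rewrite ?hi // => _; case: (ginvF j); rewrite ?hj //.
    by move=> + _; rewrite -e; simp => /negP.
  - move=> e; case: (f1 j); rewrite ?hj // => _; case: (ginvF i); rewrite ?hi //.
    by move=> + _; rewrite e; simp => /negP.
  - move=> e; case: (ginvF i); rewrite ?hi // => _ ei.
    by case: (ginvF j); rewrite ?hj // => _ ej; rewrite -ei -ej e.
have sE : forall i, Psi w p i = PsiF w p i.
  by move=> i; rewrite /Psi -pvalE insubdK //; apply/injectiveP.
have hOu : forall i, i \in Ou w -> Psi w p i = p.1 i.
  by move=> i hi; rewrite sE ffunE hi.
have hOu' : forall i, i \notin Ou w ->
    [/\ Psi w p i \in Ol w & p.2 (Psi w p i) = i].
  by move=> i hi; rewrite sE ffunE (negbTE hi); case: (ginvF i hi).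
have lt1 : forall i, i \in Ou w -> i < Psi w p i.
  by move=> i hi; rewrite hOu //; case: (f1 i hi).
have lt2 : forall i, i \notin Ou w -> Psi w p i < i.
  move=> i hi; case: (hOu' i hi) => xO gx.
  by case: (g1 _ xO); rewrite gx.
have W : wd (Psi w p) = w.
  apply/ffunP => a; rewrite wdE.
  have -> : (a < Psi w p a) = (w a).1.
    case: (boolP (a \in Ou w)) => ha; first by rewrite lt1 //; move: ha; simp.
    have := lt2 a ha; move: ha; simp => /negbTE -> h; lia.
  have -> : ((Psi w p)^-1%g a < a) = (w a).2.
    set b := ((Psi w p)^-1)%g a.
    have sb : Psi w p b = a by rewrite /b permKV.
    case: (boolP (b \in Ou w)) => hb.
      have := lt1 b hb; rewrite sb => ->.
      by case: (f1 b hb) => _; rewrite -hOu // sb; simp.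
    have := lt2 b hb; case: (hOu' b hb); rewrite sb => aO ga.
    case: (g1 a aO); rewrite ga => ab _ _.
    by move: aO; simp => /negbTE ->; lia.
  by case: (w a).
have D : derangement (Psi w p).
  apply/forallP => i; apply/negP => /eqP e.
  case: (boolP (i \in Ou w)) => hi.
    by have := lt1 i hi; rewrite e ltnn.
  by have := lt2 i hi; rewrite e ltnn.
split => //.
have E1 : (Phi (Psi w p)).1 = p.1.
  apply/ffunP => i; rewrite Phi1E; case: (boolP (i \in Ou w)) => hi.
    by rewrite lt1 // hOu.
  have := lt2 i hi => h; have -> : (i < Psi w p i) = false by lia.
  by rewrite f2.
have E2 : (Phi (Psi w p)).2 = p.2.
  apply/ffunP => x; rewrite Phi2E; case: (boolP (x \in Ol w)) => hx.
    have gxC : p.2 x \notin Ou w by case: (g1 x hx) => _; simp.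
    case: (hOu' _ gxC) => yO gy; have e := g3 _ _ yO hx gy.
    have -> : ((Psi w p)^-1)%g x = p.2 x by rewrite -e permK.
    by case: (g1 x hx) => ->.
  have : ((Psi w p)^-1)%g x < x.
    by have := congr1 (fun f : {ffun 'I_n -> bool * bool} => f x) W; rewrite ffunE /=; move: hx; simp => /negPn hx2 e; move: hx2; rewrite -e.
  move=> h; have -> : (x < ((Psi w p)^-1)%g x) = false by lia.
  by rewrite g2.
by rewrite [Phi _]surjective_pairing [p]surjective_pairing E1 E2.
Qed.

Lemma card_sumb (T : finType) (P : pred T) : #|[set x | P x]| = \sum_x (P x : nat).
Proof.
rewrite -sum1_card big_mkcond /=; apply: eq_bigr => x _; rewrite inE.
by case: (P x).
Qed.

Lemma dsum_cond (A : {set 'I_n}) (b : 'I_n -> 'I_n -> bool) :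
  \sum_(i in A) \sum_(j in A) (b i j : nat) =
  \sum_i \sum_j ([&& i \in A, j \in A & b i j] : nat).
Proof.
rewrite big_mkcond; apply: eq_bigr => i _; case: ifP => hi /=; last by rewrite big1.
by rewrite big_mkcond; apply: eq_bigr => j _; case: ifP.
Qed.

Lemma NE s : derangement s ->
  nest s = (nestf (Ou (wd s)) (Phi s).1 + nestf (Ol (wd s)) (Phi s).2)%N.
Proof.
move=> d.
have U : nestf (Ou (wd s)) (Phi s).1 =
    \sum_(i : 'I_n) \sum_(j : 'I_n) ([&& j < i, i < s i & s i < s j] : nat).
  rewrite /nestf dsum_cond; apply: eq_bigr => i _; apply: eq_bigr => j _.
  simp; have := der_ne d i; have := der_ne d j.
  by do 2 case: ifP => ?; lia.
have L : nestf (Ol (wd s)) (Phi s).2 =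
    \sum_(i : 'I_n) \sum_(j : 'I_n) ([&& s j < s i, s i <= i & i < j] : nat).
  rewrite /nestf dsum_cond (reindex_inj (@perm_inj _ s)) /=.
  apply: eq_bigr => i _; rewrite (reindex_inj (@perm_inj _ s)) /=.
  apply: eq_bigr => j _; simp; rewrite !permK.
  have := der_ne d i; have := der_ne d j.
  by do 2 case: ifP => ?; lia.
rewrite U L -big_split /nest; apply: eq_bigr => i _.
rewrite card_sumb -big_split; apply: eq_bigr => j _ /=.
lia.
Qed.

Lemma Nsum (R : comNzRingType) (q : R) w :
  (\sum_(s | derangement s && (wd s == w)) q ^+ nest s)%R =
  (Msum q (Ou w) (Cu w) * Msum q (Ol w) (Cl w))%R.
Proof.
apply/esym; rewrite /Msum big_distrl /=.
under eq_bigr => f _ do rewrite big_distrr /=.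
rewrite pair_big /= (reindex_onto (@Phi) (Psi w)); last first.
  by move=> p /andP [h1 h2]; case: (Psi_props h1 h2).
apply: eq_big => [s|s].
  apply/idP/idP.
    case/andP => /andP [h1 h2] /eqP e; case: (Psi_props h1 h2); rewrite e => -> -> _.
    by rewrite eqxx.
  by case/andP => d /eqP <-; rewrite Phi1_S // Phi2_S // Psi_Phi // eqxx.
case/andP => /andP [h1 h2] /eqP e; case: (Psi_props h1 h2); rewrite e => d <- _.
by rewrite -exprD NE.
Qed.
End Der.

Section Inv.
Variable n : nat.
Implicit Types (s : 'S_n) (w : {ffun 'I_n -> bool * bool}).

Definition hm w (a : 'I_n) : nat :=
  \sum_(b : 'I_n) ((b < a) && (w b).1 && ~~ (w b).2 : nat) -
  \sum_(b : 'I_n) ((b < a) && ~~ (w b).1 && (w b).2 : nat).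

Definition gfun (z : bool * bool) (h : nat) : nat :=
  match z with (false, true) => (2 * h - 1)%N | (true, false) => 0%N | _ => h end.

Definition Gw w : nat := \sum_(a : 'I_n) gfun (w a) (hm w a).

Lemma sum_at (a x : 'I_n) (P : 'I_n -> bool) (f : 'I_n -> 'I_n) :
  injective f -> f x = a ->
  \sum_(i : 'I_n) (P i && ((f i : nat) == a) : nat) = P x.
Proof.
move=> finj fx; rewrite (bigD1 x) //= fx eqxx andbT.
rewrite big1 ?addn0 //; move=> i ix.
have ne : f i != a by rewrite -fx (inj_eq finj).
by rewrite (negbTE (ordne ne)) andbF.
Qed.

Lemma sum_inv_pairs s : Defs.inv s =
  \sum_(i : 'I_n) \sum_(j : 'I_n) ((i < j) && (s j < s i) : nat).
Proof. by rewrite /Defs.inv card_sumb pair_bigA. Qed.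

Lemma nest_sum s : nest s =
  (\sum_(i : 'I_n) \sum_(j : 'I_n) ([&& i < j, j < s j & s j < s i] : nat) +
   \sum_(i : 'I_n) \sum_(j : 'I_n) ([&& s j < s i, s i <= i & i < j] : nat))%N.
Proof.
rewrite exchange_big /= -big_split /nest; apply: eq_bigr => i _.
rewrite card_sumb -big_split; apply: eq_bigr => j _ /=.
lia.
Qed.

Section S.
Variable s : 'S_n.
Hypothesis d : derangement s.

Let x1 (a : 'I_n) := \sum_(j : 'I_n) ((a < j) && (s j < a) : nat).
Let x2 (a : 'I_n) := \sum_(i : 'I_n) ((i < a) && (a < s i) : nat).
Let hs (a : 'I_n) := \sum_(i : 'I_n) ((i < a) && (a <= s i) : nat).

Lemma inv_split : Defs.inv s = (nest s +
   \sum_(i : 'I_n) \sum_(j : 'I_n) ([&& i < j, i < s i, s j < j & s j < s i] : nat))%N.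
Proof.
rewrite sum_inv_pairs nest_sum -!big_split; apply: eq_bigr => i _.
rewrite -!big_split; apply: eq_bigr => j _ /=.
have := der_ne d i; have := der_ne d j; lia.
Qed.

Lemma E_sweep :
  \sum_(i : 'I_n) \sum_(j : 'I_n) ([&& i < j, i < s i, s j < j & s j < s i] : nat) =
  \sum_(a : 'I_n) (((s^-1)%g a < a) && (s a < a) + ((s^-1)%g a < a) * x1 a +
                   (s a < a) * x2 a)%N.
Proof.
rewrite (reindex_inj (@perm_inj _ (s^-1)%g)) /=.
have E : forall b j : 'I_n,
  ([&& (s^-1)%g b < j, (s^-1)%g b < s ((s^-1)%g b), s j < j & s j < s ((s^-1)%g b)] : nat) =
  ((((s^-1)%g b < b) && (s b < b) && ((j : nat) == b)) +
   ((s^-1)%g b < b) * ((b < j) && (s j < b)) +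
   ((s j < j) * ((j < b) && ((s^-1)%g b < j))))%N.
  move=> b j; rewrite permKV.
  case: (ltngtP b j) => [bj|jb|/val_inj bj].
  - have := der_ne d j; lia.
  - have := der_ne d j; lia.
  - by subst; lia.
under eq_bigr => b _ do rewrite (eq_bigr _ (fun j _ => E b j)).
under eq_bigr => b _ do rewrite !big_split /=.
rewrite !big_split /=; congr (_ + _ + _)%N.
- apply: eq_bigr => b _.
  by rewrite (@sum_at b b (fun _ => ((s^-1)%g b < b) && (s b < b)) id).
- by apply: eq_bigr => b _; rewrite -big_distrr.
- rewrite exchange_big; apply: eq_bigr => j _; rewrite -big_distrr /=; congr (_ * _)%N.
  rewrite (reindex_inj (@perm_inj _ s)); apply: eq_bigr => i _; rewrite permK /=.
  by rewrite andbC.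
Qed.

Lemma F1 (a : 'I_n) : hs a = (x2 a + ((s^-1)%g a < a))%N.
Proof.
have h := @sum_at a ((s^-1)%g a) (fun i => i < a) s (@perm_inj _ s) (permKV s a).
rewrite -h /hs /x2 -big_split; apply: eq_bigr => i _ /=; lia.
Qed.

Lemma F2 (a : 'I_n) : \sum_(j : 'I_n) ((a <= j) && (s j < a) : nat) = (x1 a + (s a < a))%N.
Proof.
have h := @sum_at a a (fun j => s j < a) id (fun x y (e : id x = id y) => e) erefl.
rewrite -h /x1 -big_split; apply: eq_bigr => i _ /=; lia.
Qed.

Lemma F3 (a : 'I_n) : hs a = \sum_(j : 'I_n) ((a <= j) && (s j < a) : nat).
Proof.
have e1 : \sum_(i : 'I_n) ((i < a) : nat) =
   (\sum_(i : 'I_n) ((i < a) && (s i < a) : nat) + hs a)%N.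
  by rewrite /hs -big_split; apply: eq_bigr => i _ /=; lia.
have e2 : \sum_(i : 'I_n) ((s i < a) : nat) =
   (\sum_(i : 'I_n) ((i < a) && (s i < a) : nat) +
    \sum_(j : 'I_n) ((a <= j) && (s j < a) : nat))%N.
  by rewrite -big_split; apply: eq_bigr => i _ /=; lia.
have e3 : \sum_(i : 'I_n) ((s i < a) : nat) = \sum_(i : 'I_n) ((i < a) : nat).
  by rewrite [RHS](reindex_inj (@perm_inj _ s)).
lia.
Qed.

Lemma F4 (a : 'I_n) : hs a = hm (wd s) a.
Proof.
set X := \sum_(b : 'I_n) ((b < a) && (b < s b) : nat).
set Y := \sum_(b : 'I_n) ((b < a) && ((s^-1)%g b < b) : nat).
set Z := \sum_(b : 'I_n) ((b < s b) && (s b < a) : nat).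
have eX : X = (Z + hs a)%N.
  by rewrite /X /Z /hs -big_split; apply: eq_bigr => b _ /=; lia.
have eY : Y = Z.
  rewrite /Y (reindex_inj (@perm_inj _ s)); apply: eq_bigr => b _ /=.
  by rewrite permK andbC.
have eX2 : X = (\sum_(b : 'I_n) ((b < a) && (wd s b).1 && ~~ (wd s b).2 : nat) +
                \sum_(b : 'I_n) ((b < a) && (b < s b) && ((s^-1)%g b < b) : nat))%N.
  by rewrite /X -big_split; apply: eq_bigr => b _; rewrite wdE /=; lia.
have eY2 : Y = (\sum_(b : 'I_n) ((b < a) && ~~ (wd s b).1 && (wd s b).2 : nat) +
                \sum_(b : 'I_n) ((b < a) && (b < s b) && ((s^-1)%g b < b) : nat))%N.
  by rewrite /Y -big_split; apply: eq_bigr => b _; rewrite wdE /=; lia.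
rewrite /hm; lia.
Qed.

Lemma invE : Defs.inv s = (nest s + Gw (wd s))%N.
Proof.
rewrite inv_split E_sweep; congr (_ + _)%N; apply: eq_bigr => a _.
rewrite -F4 wdE; have f1 := F1 a; have f2 := F2 a; have f3 := F3 a.
have := der_ne d a; have := der_inv_ne d a => ni ns.
case h1 : (a < s a); case h2 : ((s^-1)%g a < a); case h3 : (s a < a) => /=; lia.
Qed.
End S.
End Inv.

Section Asm.
Variable n : nat.
Implicit Types (s : 'S_n) (w m : {ffun 'I_n -> bool * bool}).

Definition cnt w (z : bool * bool) : nat := \sum_(a : 'I_n) ((w a == z) : nat).
Definition c1 w : nat := \sum_(a : 'I_n) ((w a).1 : nat).
Definition mult (z : bool * bool) : nat :=
  match z with (false, true) => 2 | (true, false) => 0 | _ => 1 end.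
Definition Kw (R : comNzRingType) (q : R) w : R :=
  ((cnt w (true, false) == cnt w (false, true))%:R *
   \prod_(a : 'I_n) qn q (hm w a) ^+ mult (w a))%R.
Definition gc (c : stat_choice) w : nat :=
  match c with Nest => 0 | Inv => Gw w end.
Definition mg (z : bool * bool) := if z == (true, true) then (false, false) else z.
Definition mgw w : {ffun 'I_n -> bool * bool} := [ffun a => mg (w a)].
Definition Phit (R : comNzRingType) (t : R) m : R :=
  (\prod_(a : 'I_n) (if m a == (false, false) then 1 + t
                     else if m a == (true, true) then 0 else 1))%R.

Lemma stat_word c s : derangement s -> stat c s = (nest s + gc c (wd s))%N.
Proof. by case: c => d //=; rewrite ?addn0 // invE. Qed.

Lemma cpk_word s : derangement s -> cpk s = cnt (wd s) (false, true).
Proof.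
move=> d; rewrite /cpk card_sumb; apply: eq_bigr => a _; rewrite wdE xpair_eqE.
have := der_ne d a; case h1 : ((s^-1)%g a < a); case h2 : (a < s a) => /=; lia.
Qed.

Lemma exc_word s : exc s = c1 (wd s).
Proof. by rewrite /exc card_sumb; apply: eq_bigr => a _; rewrite wdE. Qed.

Lemma card_below (A : {set 'I_n}) (x : 'I_n) :
  #|below A x| = \sum_(b : 'I_n) ((b < x) && (b \in A) : nat).
Proof.
rewrite /below (_ : [set y in A | y < x] = [set y : 'I_n | (y < x) && (y \in A)]).
  by rewrite card_sumb.
by apply/setP => y; rewrite !inE andbC.
Qed.

Lemma card_set_sum (A : {set 'I_n}) : #|A| = \sum_(b : 'I_n) ((b \in A) : nat).
Proof. by rewrite -sum1_card big_mkcond; apply: eq_bigr => b _; case: (b \in A). Qed.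

Lemma N_K (R : comNzRingType) (q : R) w :
  (\sum_(s | derangement s && (wd s == w)) q ^+ nest s)%R = Kw q w.
Proof.
rewrite Nsum !(Msum_closed _ _ (erefl _)).
have hu : forall c, hc (Ou w) (Cu w) c = hm w c.
  move=> c; rewrite /hc /hm !card_below.
  have e1 : \sum_(b : 'I_n) ((b < c) && (b \in Ou w) : nat) =
    (\sum_(b : 'I_n) ((b < c) && (w b).1 && ~~ (w b).2 : nat) +
     \sum_(b : 'I_n) ((b < c) && (w b).1 && (w b).2 : nat))%N.
    by rewrite -big_split; apply: eq_bigr => b _; rewrite inOu; case: (w b) => [[] []] /=; lia.
  have e2 : \sum_(b : 'I_n) ((b < c) && (b \in Cu w) : nat) =
    (\sum_(b : 'I_n) ((b < c) && ~~ (w b).1 && (w b).2 : nat) +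
     \sum_(b : 'I_n) ((b < c) && (w b).1 && (w b).2 : nat))%N.
    by rewrite -big_split; apply: eq_bigr => b _; rewrite inCu; case: (w b) => [[] []] /=; lia.
  rewrite e1 e2; lia.
have hl : forall c, hc (Ol w) (Cl w) c = hm w c.
  move=> c; rewrite /hc /hm !card_below.
  have e1 : \sum_(b : 'I_n) ((b < c) && (b \in Ol w) : nat) =
    (\sum_(b : 'I_n) ((b < c) && (w b).1 && ~~ (w b).2 : nat) +
     \sum_(b : 'I_n) ((b < c) && ~~ (w b).1 && ~~ (w b).2 : nat))%N.
    by rewrite -big_split; apply: eq_bigr => b _; rewrite inOl; case: (w b) => [[] []] /=; lia.
  have e2 : \sum_(b : 'I_n) ((b < c) && (b \in Cl w) : nat) =
    (\sum_(b : 'I_n) ((b < c) && ~~ (w b).1 && (w b).2 : nat) +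
     \sum_(b : 'I_n) ((b < c) && ~~ (w b).1 && ~~ (w b).2 : nat))%N.
    by rewrite -big_split; apply: eq_bigr => b _; rewrite inCl; case: (w b) => [[] []] /=; lia.
  rewrite e1 e2; lia.
have cu : (#|Ou w| == #|Cu w|) = (cnt w (true, false) == cnt w (false, true)).
  rewrite !card_set_sum /cnt.
  have e1 : \sum_(b : 'I_n) ((b \in Ou w) : nat) =
    (\sum_(b : 'I_n) ((w b == (true, false)) : nat) +
     \sum_(b : 'I_n) ((w b == (true, true)) : nat))%N.
    by rewrite -big_split; apply: eq_bigr => b _; rewrite inOu; case: (w b) => [[] []].
  have e2 : \sum_(b : 'I_n) ((b \in Cu w) : nat) =
    (\sum_(b : 'I_n) ((w b == (false, true)) : nat) +
     \sum_(b : 'I_n) ((w b == (true, true)) : nat))%N.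
    by rewrite -big_split; apply: eq_bigr => b _; rewrite inCu; case: (w b) => [[] []].
  rewrite e1 e2; lia.
have cl : (#|Ol w| == #|Cl w|) = (cnt w (true, false) == cnt w (false, true)).
  rewrite !card_set_sum /cnt.
  have e1 : \sum_(b : 'I_n) ((b \in Ol w) : nat) =
    (\sum_(b : 'I_n) ((w b == (true, false)) : nat) +
     \sum_(b : 'I_n) ((w b == (false, false)) : nat))%N.
    by rewrite -big_split; apply: eq_bigr => b _; rewrite inOl; case: (w b) => [[] []].
  have e2 : \sum_(b : 'I_n) ((b \in Cl w) : nat) =
    (\sum_(b : 'I_n) ((w b == (false, true)) : nat) +
     \sum_(b : 'I_n) ((w b == (false, false)) : nat))%N.
    by rewrite -big_split; apply: eq_bigr => b _; rewrite inCl; case: (w b) => [[] []].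
  rewrite e1 e2; lia.
rewrite cu cl /Kw.
case: (cnt w (true, false) == cnt w (false, true)); last by rewrite !mul0r.
rewrite !mul1r (big_mkcond (fun c => c \in Cu w)) (big_mkcond (fun c => c \in Cl w)) -big_split /=.
apply: eq_bigr => a _; rewrite inCu inCl hu hl.
by case: (w a) => [[] []] /=; rewrite ?mulr1 ?mul1r ?expr0 ?expr1 ?expr2.
Qed.

Lemma hm_mg w a : hm (mgw w) a = hm w a.
Proof.
rewrite /hm; congr (_ - _)%N; apply: eq_bigr => b _; rewrite ffunE /mg.
all: by case: (w b) => [[] []] /=; rewrite ?andbT ?andbF.
Qed.

Lemma cntV_mg w : cnt (mgw w) (true, false) = cnt w (true, false).
Proof. by apply: eq_bigr => a _; rewrite ffunE /mg; case: (w a) => [[] []] /=. Qed.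
Lemma cntP_mg w : cnt (mgw w) (false, true) = cnt w (false, true).
Proof. by apply: eq_bigr => a _; rewrite ffunE /mg; case: (w a) => [[] []] /=. Qed.

Lemma Kw_mg (R : comNzRingType) (q : R) w : Kw q (mgw w) = Kw q w.
Proof.
rewrite /Kw cntV_mg cntP_mg; congr (_ * _)%R; apply: eq_bigr => a _.
by rewrite hm_mg ffunE /mg; case: (w a) => [[] []] /=.
Qed.

Lemma gc_mg c w : gc c (mgw w) = gc c w.
Proof.
case: c => //=; rewrite /Gw; apply: eq_bigr => a _.
by rewrite hm_mg ffunE /mg; case: (w a) => [[] []] /=.
Qed.

Lemma c1_mg w : c1 w = (cnt (mgw w) (true, false) + cnt w (true, true))%N.
Proof.
by rewrite /c1 /cnt -big_split; apply: eq_bigr => a _; rewrite ffunE /mg;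
  case: (w a) => [[] []] /=.
Qed.

Lemma P3_w (R : comNzRingType) c (q y t : R) : P3 c n q y t =
  (\sum_w (y ^+ cnt w (false, true) * t ^+ c1 w * q ^+ gc c w * Kw q w))%R.
Proof.
rewrite /P3 (partition_big (@wd n) xpredT) //=; apply: eq_bigr => w _.
rewrite -N_K big_distrr /=; apply: eq_bigr => s /andP [d /eqP <-].
rewrite stat_word // cpk_word // exc_word exprD; ring.
Qed.

Lemma sum_bb (R : comNzRingType) (F : bool * bool -> R) :
  (\sum_z F z = F (true, true) + F (true, false) + F (false, true) + F (false, false))%R.
Proof.
rewrite (bigD1 (true, true)) //= (bigD1 (true, false)) //= (bigD1 (false, true)) //=.
rewrite (bigD1 (false, false)) //= big1 ?addr0 ?addrA //.
by case => [[] []].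
Qed.

Lemma fam_sum (R : comNzRingType) (t : R) m :
  (\sum_(w | mgw w == m) t ^+ cnt w (true, true))%R = Phit t m.
Proof.
have E : forall a, (if m a == (false, false) then 1 + t
                    else if m a == (true, true) then 0 else 1)%R =
         (\sum_(z | mg z == m a) t ^+ (z == (true, true)))%R.
  move=> a; rewrite big_mkcond sum_bb /mg /=.
  by case: (m a) => [[] []] /=; rewrite ?expr0 ?expr1; ring.
rewrite /Phit (eq_bigr _ (fun a _ => E a)) bigA_distr_big_dep.
apply: eq_big => [w|w _].
  apply/eqP/familyP => [<- a|h].
    by rewrite unfold_in /= ffunE.
  by apply/ffunP => a; rewrite ffunE; move: (h a); rewrite unfold_in /= => /eqP.
by rewrite prodrXr.
Qed.

Lemma P3_m (R : comNzRingType) c (q y t : R) : P3 c n q y t =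
  (\sum_m (y ^+ cnt m (false, true) * t ^+ cnt m (true, false) * q ^+ gc c m *
           Kw q m * Phit t m))%R.
Proof.
rewrite P3_w (partition_big (@mgw) xpredT) //=; apply: eq_bigr => m _.
rewrite -fam_sum big_distrr /=; apply: eq_bigr => w /eqP <-.
rewrite cntP_mg gc_mg Kw_mg (c1_mg w) exprD; ring.
Qed.

Lemma Dn_P3 (R : comNzRingType) c (q t : R) : Dn c n q t = P3 c n q 1 t.
Proof. by rewrite /Dn /P3; apply: eq_bigr => s _; rewrite expr1n mulr1. Qed.

Lemma Phit_A (R : comNzRingType) (t : R) m a : m a = (true, true) -> Phit t m = 0%R.
Proof. by move=> ma; rewrite /Phit (bigD1 a) //= ma /= mul0r. Qed.

Lemma Phit_noA (R : comNzRingType) (t : R) m : (forall a, m a != (true, true)) ->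
  Phit t m = ((1 + t) ^+ cnt m (false, false))%R.
Proof.
move=> h; rewrite /Phit /cnt -prodrXr; apply: eq_bigr => a _.
by have := h a; case: (m a) => [[] []] //= _; rewrite ?expr0 ?expr1.
Qed.

Lemma cnt_total m : (forall a, m a != (true, true)) ->
  (cnt m (true, false) + cnt m (false, true) + cnt m (false, false))%N = n.
Proof.
move=> h; rewrite /cnt -!big_split /=.
transitivity (\sum_(a : 'I_n) 1)%N.
  by apply: eq_bigr => a _; have := h a; case: (m a) => [[] []].
by rewrite sum1dep_card (_ : [set x : 'I_n | true] = setT) ?cardsT ?card_ord //.
Qed.

Lemma alg_id (F : fieldType) (cc X T t : F) k d :
  (cc ^+ 2 * X * T = t -> cc * (1 + T) = 1 + t ->
  t ^+ k * (1 + t) ^+ d = cc ^+ (k + k + d) * (X ^+ k * T ^+ k * (1 + T) ^+ d))%R.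
Proof.
move=> <- <-; rewrite !exprMn !exprD; ring.
Qed.

Lemma part1 (F : fieldType) c (q x t : F) :
  (1 + x != 0 -> x + t != 0 -> 1 + x * t != 0 ->
  Dn c n q t = ((1 + x * t) / (1 + x)) ^+ n *
     P3 c n q ((1 + x) ^+ 2 * t / ((x + t) * (1 + x * t))) ((x + t) / (1 + x * t)))%R.
Proof.
move=> h1 h2 h3.
set cc := ((1 + x * t) / (1 + x))%R.
set X := ((1 + x) ^+ 2 * t / ((x + t) * (1 + x * t)))%R.
set T := ((x + t) / (1 + x * t))%R.
have e1 : (cc ^+ 2 * X * T = t)%R by rewrite /cc /X /T; field; rewrite h1 h2 h3.
have e2 : (cc * (1 + T) = 1 + t)%R by rewrite /cc /T; field; rewrite h1 h3.
rewrite Dn_P3 !P3_m big_distrr; apply: eq_bigr => m _ /=.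
case: (boolP [exists a, m a == (true, true)]) => [/existsP [a /eqP ma]|noA].
  by rewrite !(Phit_A _ ma) !mulr0.
have hA : forall a, m a != (true, true).
  by move=> a; apply: contra noA => h; apply/existsP; exists a.
rewrite !Phit_noA // expr1n mul1r /Kw.
case: eqP => [eVP|_] /=; last by rewrite !(mul0r, mulr0).
have tot := cnt_total hA.
have -> : (cc ^+ n = cc ^+ (cnt m (true, false) + cnt m (true, false) + cnt m (false, false)))%R.
  by congr (_ ^+ _)%R; lia.
have := alg_id (cnt m (true, false)) (cnt m (false, false)) e1 e2.
rewrite -eVP => H.
set P1 := (\prod_(a < n) _)%R.
set g := (q ^+ gc c m)%R.
transitivity ((t ^+ cnt m (true, false) * (1 + t) ^+ cnt m (false, false)) * (g * P1))%R.
  by ring.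
by rewrite H; ring.
Qed.
End Asm.

Local Open Scope ring_scope.

Lemma alg_part2 (R : rcfType) (x t s : R) :
  let d := (1 + t) ^+ 2 - 4%:R * x * t in
  let u := (1 + t ^+ 2 - 2%:R * x * t - (1 - t) * s) / (2%:R * (1 - x) * t) in
  let v := ((1 + t) ^+ 2 - 2%:R * x * t - (1 + t) * s) / (2%:R * x * t) in
  s ^+ 2 = d -> x != 0 -> x != 1 -> t != 0 ->
  u + v = t * (1 + u * v) /\ (1 + u) ^+ 2 * v = x * t * (1 + u * v) ^+ 2.
Proof.
move=> d u v s2 hx0 hx1 ht.
have h1x : 1 - x != 0 by rewrite subr_eq0 eq_sym.
set U := 1 + t ^+ 2 - 2%:R * x * t - (1 - t) * s.
set W := (1 + t) ^+ 2 - 2%:R * x * t - (1 + t) * s.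
set al := 2%:R * (1 - x) * t.
set be := 2%:R * x * t.
have hal : al != 0 by rewrite /al !mulf_neq0 // pnatr_eq0.
have hbe : be != 0 by rewrite /be !mulf_neq0 // pnatr_eq0.
have E1 : U * be + W * al - t * (al * be + U * W) = (s ^+ 2 - d) * (t ^+ 3 - t).
  by rewrite /U /W /al /be /d; ring.
have E2 : (al + U) ^+ 2 * W * be - x * t * (al * be + U * W) ^+ 2 =
   (s ^+ 2 - d) * (0 - 1%:R * x ^+ 1 * t ^+ 1 + 2%:R * x ^+ 1 * t ^+ 1 * s ^+ 1 - 1%:R * x ^+ 1 * t ^+ 1 * s ^+ 2 - 6%:R * x ^+ 1 * t ^+ 2 + 6%:R * x ^+ 1 * t ^+ 2 * s ^+ 1 - 9%:R * x ^+ 1 * t ^+ 3 - 2%:R * x ^+ 1 * t ^+ 3 * s ^+ 1 + 2%:R * x ^+ 1 * t ^+ 3 * s ^+ 2 - 4%:R * x ^+ 1 * t ^+ 4 - 6%:R * x ^+ 1 * t ^+ 4 * s ^+ 1 + 1%:R * x ^+ 1 * t ^+ 5 - 1%:R * x ^+ 1 * t ^+ 5 * s ^+ 2 + 2%:R * x ^+ 1 * t ^+ 6 + 1%:R * x ^+ 1 * t ^+ 7 + 8%:R * x ^+ 2 * t ^+ 2 - 8%:R * x ^+ 2 * t ^+ 2 * s ^+ 1 + 24%:R * x ^+ 2 * t ^+ 3 + 4%:R * x ^+ 2 * t ^+ 4 + 8%:R * x ^+ 2 * t ^+ 4 * s ^+ 1 - 4%:R * x ^+ 2 * t ^+ 6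 - 16%:R * x ^+ 3 * t ^+ 3).
  by rewrite /U /W /al /be /d; ring.
rewrite s2 subrr mul0r in E1.
rewrite s2 subrr mul0r in E2.
split.
  apply/eqP; rewrite -subr_eq0.
  have -> : u + v - t * (1 + u * v) = (U * be + W * al - t * (al * be + U * W)) / (al * be).
    by rewrite /u /v -/U -/W -/al -/be; field; rewrite hal hbe.
  by rewrite E1 mul0r.
apply/eqP; rewrite -subr_eq0.
have -> : (1 + u) ^+ 2 * v - x * t * (1 + u * v) ^+ 2 =
   ((al + U) ^+ 2 * W * be - x * t * (al * be + U * W) ^+ 2) / (al ^+ 2 * be ^+ 2).
  by rewrite /u /v -/U -/W -/al -/be; field; rewrite hal hbe.
by rewrite E2 mul0r.
Qed.

Unset Implicit Arguments.
Theorem corollary3p7 (R : rcfType) (n : nat) (c : stat_choice) :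
  (0 < n)%N ->
  (forall q x t : R,
     1 + x != 0 -> x + t != 0 -> 1 + x * t != 0 ->
     Dn c n q t =
       ((1 + x * t) / (1 + x)) ^+ n *
       P3 c n q ((1 + x) ^+ 2 * t / ((x + t) * (1 + x * t)))
                ((x + t) / (1 + x * t)))
  /\
  (forall q x t : R,
     let d := (1 + t) ^+ 2 - 4%:R * x * t in
     let u := (1 + t ^+ 2 - 2%:R * x * t - (1 - t) * Num.sqrt d)
                / (2%:R * (1 - x) * t) in
     let v := ((1 + t) ^+ 2 - 2%:R * x * t - (1 + t) * Num.sqrt d)
                / (2%:R * x * t) in
     0 <= d -> x != 0 -> x != 1 -> t != 0 ->
     1 + u != 0 -> u + v != 0 -> 1 + u * v != 0 ->
     P3 c n q x t = ((1 + u) / (1 + u * v)) ^+ n * Dn c n q v).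
Proof.
move=> _; split.
  by move=> q x t h1 h2 h3; apply: part1.
move=> q x t d u v hd hx0 hx1 ht hu1 huv h1uv.
have s2 : Num.sqrt d ^+ 2 = d by rewrite sqr_sqrtr.
have [eT eX] : u + v = t * (1 + u * v) /\ (1 + u) ^+ 2 * v = x * t * (1 + u * v) ^+ 2.
  exact: (alg_part2 s2 hx0 hx1 ht).
have P := part1 n c q hu1 huv h1uv.
have eX' : (1 + u) ^+ 2 * v / ((u + v) * (1 + u * v)) = x.
  by rewrite eX eT; field; rewrite ht h1uv.
have eT' : (u + v) / (1 + u * v) = t by rewrite eT; field; rewrite h1uv.
rewrite eX' eT' in P.
rewrite P mulrA -exprMn (_ : (1 + u) / (1 + u * v) * ((1 + u * v) / (1 + u)) = 1).
  by rewrite expr1n mul1r.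
by field; rewrite hu1 h1uv.
Qed.
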